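(* Let ${\bm X}^\star={\bm V}^\star{\bm\Sigma}^\star{\bm V}^{\star\top}\in\mathbb{R}^{d\times d}$ where ${\bm V}^\star\in\mathbb{R}^{d\times r}$ has orthonormal columns and ${\bm\Sigma}^\star$ is an $r\times r$ diagonal matrix with positive diagonal entries. Let ${\bm V}_t\in\mathbb{R}^{d\times r}$ have orthonormal columns, let ${\bm U}_t\in\mathbb{R}^{d\times r'}$, and let ${\bm S}_t={\bm V}_t{\bm V}_t^\top{\bm U}_t$. If $\|{\bm V}^\star-{\bm V}_t\|\le0.1$, then $$\big\|({\bm X}^\star-{\bm S}_t{\bm S}_t^\top){\bm V}_t\big\|_{\mathrm F}^2\ge\frac25\big\|{\bm X}^\star-{\bm S}_t{\bm S}_t^\top\big\|_{\mathrm F}^2.$$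
   Context: $\|\cdot\|$ denotes the spectral norm and $\|\cdot\|_{\mathrm F}$ the Frobenius norm. (In the paper, ${\bm U}_t$ is a gradient descent iterate and ${\bm V}_t$ an associated orthonormal matrix; the lemma uses only the stated properties.) *)

(* Defs.v *)
From HB Require Import structures.
From mathcomp Require Import all_boot all_order all_algebra.
From mathcomp Require Import boolp classical_sets reals.
Set Implicit Arguments. Unset Strict Implicit. Unset Printing Implicit Defensive.
Import Order.TTheory GRing.Theory Num.Theory.
Local Open Scope ring_scope.
Local Open Scope classical_set_scope.

Definition frobnorm {R : realType} {m n : nat} (A : 'M[R]_(m, n)) : R :=
  Num.sqrt (\sum_(i < m) \sum_(j < n) A i j ^+ 2).

Definition vnorm {R : realType} {n : nat} (x : 'cV[R]_n) : R :=
  Num.sqrt (\sum_(i < n) x i 0 ^+ 2).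

Definition specnorm {R : realType} {m n : nat} (A : 'M[R]_(m, n)) : R :=
  sup [set vnorm (A *m x) | x in [set x : 'cV[R]_n | vnorm x <= 1]].

(* Main.v *)
Require Import Defs.
From HB Require Import structures.
From mathcomp Require Import all_boot all_order all_algebra.
From mathcomp Require Import boolp classical_sets reals.
From mathcomp Require Import ring lra.
Import Order.TTheory GRing.Theory Num.Theory.
Local Open Scope ring_scope.

Section Aux.
Context {R : realType}.

Lemma sqr_normr (x : R) : `|x| ^+ 2 = x ^+ 2.
Proof. exact: real_normK (num_real x). Qed.

Definition ff {m n : nat} (A : 'M[R]_(m, n)) : R := \sum_i \sum_j A i j ^+ 2.

Lemma ff_ge0 m n (A : 'M[R]_(m, n)) : 0 <= ff A.
Proof. by apply: sumr_ge0 => i _; apply: sumr_ge0 => j _; exact: sqr_ge0. Qed.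

Lemma frobE m n (A : 'M[R]_(m, n)) : frobnorm A ^+ 2 = ff A.
Proof. by rewrite /frobnorm sqr_sqrtr // ff_ge0. Qed.

Lemma ffE m n (A : 'M[R]_(m, n)) : ff A = \tr (A^T *m A).
Proof.
rewrite /ff /mxtrace exchange_big; apply: eq_bigr => j _; rewrite !mxE.
by apply: eq_bigr => i _; rewrite !mxE expr2.
Qed.

Lemma ffT m n (A : 'M[R]_(m, n)) : ff A^T = ff A.
Proof.
rewrite /ff exchange_big; apply: eq_bigr => j _; apply: eq_bigr => i _.
by rewrite mxE.
Qed.

Lemma pyth m n (P Q : 'M[R]_m) (A : 'M[R]_(m, n)) :
  P^T = P -> Q^T = Q -> P *m P = P -> Q *m Q = Q -> P + Q = 1%:M ->
  ff A = ff (P *m A) + ff (Q *m A).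
Proof.
move=> HP HQ HPP HQQ HPQ.
rewrite !ffE !trmx_mul HP HQ -mxtraceD; congr mxtrace.
rewrite !mulmxA -[A^T *m P *m P]mulmxA HPP -[A^T *m Q *m Q]mulmxA HQQ.
by rewrite -mulmxDl -mulmxDr HPQ mulmx1.
Qed.

Lemma fiso m k n (V : 'M[R]_(m, k)) (A : 'M[R]_(k, n)) :
  V^T *m V = 1%:M -> ff (V *m A) = ff A.
Proof.
by move=> HV; rewrite !ffE trmx_mul mulmxA -(mulmxA A^T) HV mulmx1.
Qed.

Lemma fisoR m k n (V : 'M[R]_(m, k)) (A : 'M[R]_(n, k)) :
  V^T *m V = 1%:M -> ff (A *m V^T) = ff A.
Proof. by move=> HV; rewrite -ffT trmx_mul trmxK fiso // ffT. Qed.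

Lemma gscale n (k : R) (x : 'cV[R]_n) :
  \sum_i ((k *: x) i 0) ^+ 2 = k ^+ 2 * \sum_i x i 0 ^+ 2.
Proof. by rewrite mulr_sumr; apply: eq_bigr => i _; rewrite mxE exprMn. Qed.

Lemma spec_bound m n (A : 'M[R]_(m, n)) (x : 'cV[R]_n) (c : R) :
  specnorm A <= c ->
  \sum_i (A *m x) i 0 ^+ 2 <= c ^+ 2 * \sum_i x i 0 ^+ 2.
Proof.
move=> Hc.
set S := [set vnorm (A *m x) | x in [set x : 'cV[R]_n | vnorm x <= 1]]%classic.
have hs : has_sup S.
  split.
    exists (vnorm (A *m 0)); exists 0 => //=.
    rewrite /vnorm big1 ?sqrtr0 // => i _; by rewrite mxE expr0n.
  exists (Num.sqrt (\sum_i (\sum_j `|A i j|) ^+ 2)).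
  move=> _ [y Hy <-]; rewrite /vnorm ler_sqrt; last first.
    by apply: sumr_ge0 => i _; exact: sqr_ge0.
  apply: ler_sum => i _; rewrite mxE -sqr_normr.
  have Hy1 : \sum_i y i 0 ^+ 2 <= 1.
    by move: Hy; rewrite /= /vnorm -{1}sqrtr1 ler_sqrt.
  apply: lerXn2r; rewrite ?nnegrE ?normr_ge0 //.
    by apply: sumr_ge0 => j _.
  apply: (le_trans (ler_norm_sum _ _ _)); apply: ler_sum => j _.
  rewrite normrM; apply: ler_piMr => //.
  have : y j 0 ^+ 2 <= 1.
    apply: le_trans Hy1; rewrite (bigD1 j) //= lerDl.
    by apply: sumr_ge0 => k _; exact: sqr_ge0.
  rewrite -sqr_normr => h; have := normr_ge0 (y j 0); nra.
have c0 : 0 <= c.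
  have vn0 : forall k (z : 'cV[R]_k), z = 0 -> vnorm z = 0.
    by move=> k z ->; rewrite /vnorm big1 ?sqrtr0 // => i _; rewrite mxE expr0n.
  apply: le_trans Hc; apply: le_trans (sup_upper_bound hs (x := vnorm (A *m 0)) _).
    by rewrite vn0 ?mulmx0.
  by exists 0 => //=; rewrite vn0.
have g0 : 0 <= \sum_i x i 0 ^+ 2 by apply: sumr_ge0 => i _; exact: sqr_ge0.
case: (boolP (\sum_i x i 0 ^+ 2 == 0)) => [/eqP H0 | Hn0].
  have x0 : x = 0.
    apply/matrixP => i j; rewrite ord1 [RHS]mxE.
    have := psumr_eq0P (fun i _ => sqr_ge0 (x i 0)) H0 (i := i) isT.
    by move/eqP; rewrite sqrf_eq0 => /eqP.
  by rewrite x0 mulmx0 !big1 ?mulr0 // => i _; rewrite mxE expr0n.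
have gpos : 0 < \sum_i x i 0 ^+ 2 by rewrite lt_def Hn0 g0.
set t := Num.sqrt (\sum_i x i 0 ^+ 2).
have tpos : 0 < t by rewrite sqrtr_gt0.
have t2 : t ^+ 2 = \sum_i x i 0 ^+ 2 by rewrite sqr_sqrtr.
set y := t^-1 *: x.
have gy : \sum_i y i 0 ^+ 2 = 1.
  by rewrite gscale exprVn t2 mulVf // gt_eqF.
have Ay : A *m y = t^-1 *: (A *m x) by rewrite scalemxAr.
have H1 : vnorm (A *m y) <= c.
  apply: le_trans Hc; apply: sup_upper_bound => //.
  by exists y => //=; rewrite /vnorm gy sqrtr1.
have gAy0 : 0 <= \sum_i (A *m y) i 0 ^+ 2 by apply: sumr_ge0 => i _; exact: sqr_ge0.
have H2 : \sum_i (A *m y) i 0 ^+ 2 <= c ^+ 2.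
  rewrite -(sqr_sqrtr gAy0); apply: lerXn2r; rewrite ?nnegrE ?sqrtr_ge0 //.
move: H2; rewrite Ay gscale exprVn -t2.
have t20 : 0 < t ^+ 2 by rewrite exprn_gt0.
move=> h.
rewrite [c ^+ 2 * _]mulrC.
set a := \sum_i (A *m x) i 0 ^+ 2.
rewrite (_ : a = t ^+ 2 * ((t ^+ 2)^-1 * a)); last by rewrite mulrA mulfV ?mul1r // gt_eqF.
by apply: ler_wpM2l => //; exact: ltW.
Qed.

Lemma spec_boundM m n p (A : 'M[R]_(m, n)) (W : 'M[R]_(n, p)) (c : R) :
  specnorm A <= c -> ff (A *m W) <= c ^+ 2 * ff W.
Proof.
move=> Hc.
have fc : forall q k (B : 'M[R]_(q, k)),
    ff B = \sum_j \sum_i (col j B) i 0 ^+ 2.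
  move=> q k B; rewrite /ff exchange_big; apply: eq_bigr => j _.
  by apply: eq_bigr => i _; rewrite mxE.
rewrite !fc mulr_sumr; apply: ler_sum => j _.
rewrite colE -mulmxA -colE; exact: spec_bound.
Qed.

End Aux.

Theorem lemma9 (R : realType) (d r r' : nat)
  (Vstar : 'M[R]_(d, r)) (sigma : 'rV[R]_r)
  (Vt : 'M[R]_(d, r)) (Ut : 'M[R]_(d, r')) :
  Vstar^T *m Vstar = 1%:M ->
  (forall i, 0 < sigma 0 i) ->
  Vt^T *m Vt = 1%:M ->
  specnorm (Vstar - Vt) <= 1 / 10 ->
  let Xstar := Vstar *m diag_mx sigma *m Vstar^T in
  let St := Vt *m Vt^T *m Ut in
  frobnorm ((Xstar - St *m St^T) *m Vt) ^+ 2
    >= 2 / 5 * frobnorm (Xstar - St *m St^T) ^+ 2.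
Proof.
move=> HV _ HVt Hsp; rewrite /=.
set X := Vstar *m diag_mx sigma *m Vstar^T.
set S := Vt *m Vt^T *m Ut.
set P := Vt *m Vt^T. set Q := 1%:M - P.
have PT : P^T = P by rewrite /P trmx_mul trmxK.
have PP : P *m P = P by rewrite /P mulmxA -(mulmxA Vt) HVt mulmx1.
have QT : Q^T = Q by rewrite /Q raddfB /= trmx1 PT.
have QQ : Q *m Q = Q by rewrite /Q mulmxBl mul1mx mulmxBr mulmx1 PP subrr subr0.
have PQ1 : P + Q = 1%:M by rewrite /Q addrC subrK.
have QVt : Q *m Vt = 0 by rewrite /Q mulmxBl mul1mx /P -mulmxA HVt mulmx1 subrr.
have PQ : P *m Q = 0 by rewrite /Q mulmxBr mulmx1 PP subrr.
have QP : Q *m P = 0 by rewrite /Q mulmxBl mul1mx PP subrr.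
set N := Ut *m Ut^T.
have SS : S *m S^T = P *m N *m P by rewrite /S /P /N !trmx_mul !trmxK !mulmxA.
have XT : X^T = X by rewrite /X !trmx_mul trmxK tr_diag_mx mulmxA.
set M := X - S *m S^T.
have MT : M^T = M.
  by rewrite /M raddfB /= XT SS !trmx_mul /N ?trmx_mul !trmxK /P !mulmxA.
have E1 : ff (M *m Vt) = ff (M *m P) by rewrite /P mulmxA fisoR.
have E2 : ff M = ff (M *m P) + ff (M *m Q).
  rewrite -[ff M]ffT (@pyth _ _ _ P Q (M^T) PT QT PP QQ PQ1).
  by rewrite -[ff (P *m M^T)]ffT -[ff (Q *m M^T)]ffT !trmx_mul !trmxK QT.
have E3 : ff (M *m P) = ff (P *m (M *m P)) + ff (Q *m (M *m P)) by exact: pyth.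
have QMP : Q *m (M *m P) = Q *m X *m P.
  by rewrite /M SS [(X - _) *m P]mulmxBl mulmxBr !mulmxA QVt !mul0mx subr0.
have MQ : M *m Q = X *m Q.
  by rewrite /M SS [(X - _) *m Q]mulmxBl -[P *m N *m P *m Q]mulmxA PQ mulmx0 subr0.
have E4 : ff (X *m Q) = ff (P *m (X *m Q)) + ff (Q *m (X *m Q)) by exact: pyth.
have E5 : ff (Q *m X *m P) = ff (P *m (X *m Q)).
  by rewrite -ffT (trmx_mul (Q *m X) P) (trmx_mul Q X) QT XT PT mulmxA.
set W := diag_mx sigma *m Vstar^T *m Q.
have XQ : X *m Q = Vstar *m W by rewrite /X /W !mulmxA.
set E := Vstar - Vt.
have QV : Q *m Vstar = Q *m E by rewrite /E mulmxBr QVt subr0.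
have E6 : ff (Q *m (X *m Q)) <= 1 / 100 * ff W.
  rewrite XQ mulmxA QV -mulmxA.
  apply: le_trans (_ : ff (E *m W) <= _).
    rewrite (@pyth _ _ _ P Q (E *m W) PT QT PP QQ PQ1) lerDr; exact: ff_ge0.
  have -> : (1 / 100 : R) = (1 / 10) ^+ 2 by rewrite expr2; field.
  exact: spec_boundM.
have E7 : ff W = ff (P *m (X *m Q)) + ff (Q *m (X *m Q)).
  by rewrite XQ -(@fiso _ _ _ _ Vstar W HV) (@pyth _ _ _ P Q (Vstar *m W) PT QT PP QQ PQ1).
rewrite !frobE E1 E2 MQ E4.
move: E3; rewrite QMP E5 => E3.
have h1 := ff_ge0 _ _ (P *m (M *m P)).
have h2 := ff_ge0 _ _ (Q *m (X *m Q)).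
have h3 := ff_ge0 _ _ W.
move: E3 E6 E7 h1 h2 h3.
generalize (ff (M *m P)) (ff (P *m (X *m Q))) (ff (Q *m (X *m Q))) (ff W) (ff (P *m (M *m P))).
move=> m a b w p e3 e6 e7 h1 h2 h3.
lra.
Qed.
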